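(* Let $n\ge1$. If $\{H_1,H_2,H_3\}$ is a Hamilton decomposition of $G_{n,3}$ and $\{E_1,\dots,E_n\}$ is a Hamilton decomposition of $Q_{2n}$ (each $E_i$ a directed Hamilton cycle starting at $\mathbf 0$), then $\{g(E_i,H_j):1\le i\le n,\ 1\le j\le3\}$ is a Hamilton decomposition of $Q_{6n}$.
   Context: A Hamilton decomposition is a partition of the edge set into edge-disjoint Hamilton cycles. $Q_{2n}$ is realized on quaternary strings $q_1\cdots q_n$, adjacent iff they differ in exactly one position by $\pm1\pmod4$; $\mathbf 0=0\cdots0$. $G_{n,3}$ has vertex set $(\mathbb Z/4^n\mathbb Z)^3$, adjacency: differ in exactly one coordinate by $\pm1\pmod{4^n}$. For a directed Hamilton cycle $E$ of $Q_{2n}$ listing $e_0=\mathbf 0,\dots,e_{4^n-1}$, $\pi_E(e_p)=p$. Identify $V(Q_{6n})$ with triples $(u,w,t)$ of quaternary strings of length $n$ and set $\Psi_E(u,w,t)=(\pi_E(u),\pi_E(w),\pi_E(t))$; for a Hamilton cycle $H$ of $G_{n,3}$, $g(E,H):=\Psi_E^{-1}(H)$. *)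

(* Defs.v *)
From HB Require Import structures.
From mathcomp Require Import all_boot all_order all_algebra.
Set Implicit Arguments. Unset Strict Implicit. Unset Printing Implicit Defensive.
Import GRing.Theory.
Local Open Scope ring_scope.

Definition adjZ (I : finType) (R : nzRingType) (x y : {ffun I -> R}) : bool :=
  [exists i, [forall j, (j != i) ==> (x j == y j)]
             && ((y i == x i + 1) || (y i == x i - 1))].

Definition HamCycle (T : finType) (adj : rel T) (c : seq T) : Prop :=
  [/\ uniq c, size c = #|T|, (2 < size c)%N & cycle adj c].

Definition cycle_edge (T : eqType) (c : seq T) (x y : T) : bool :=
  [&& x \in c, y \in c & (next c x == y) || (next c y == x)].

Definition HamDecomp (T I : finType) (adj : rel T) (F : I -> seq T) : Prop :=
  (forall i, HamCycle adj (F i)) /\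
  (forall x y, adj x y -> exists! i, cycle_edge (F i) x y).

(* Q_{2n}: quaternary strings of length n *)
Definition Qv (n : nat) := {ffun 'I_n -> 'Z_4}.
Definition Qadj (n : nat) : rel (Qv n) := fun x y => adjZ x y.
Definition qzero (n : nat) : Qv n := [ffun _ => 0].

Definition Gv (n : nat) := {ffun 'I_3 -> 'Z_(4 ^ n)}.
Definition Gadj (n : nat) : rel (Gv n) := fun x y => adjZ x y.

(* Q_{6n}, identified with triples (u,w,t) of quaternary strings of length n:
   a string indexed by (block j, position i). *)
Definition Q6v (n : nat) := {ffun 'I_3 * 'I_n -> 'Z_4}.
Definition Q6adj (n : nat) : rel (Q6v n) := fun x y => adjZ x y.

Definition piE (n : nat) (E : seq (Qv n)) (x : Qv n) : 'Z_(4 ^ n) :=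
  (index x E)%:R.

Definition PsiE (n : nat) (E : seq (Qv n)) (v : Q6v n) : Gv n :=
  [ffun j => piE E [ffun i => v (j, i)]].

(* Psi_E^{-1} (Psi_E is a bijection when E is a Hamilton cycle) *)
Definition PsiE_inv (n : nat) (E : seq (Qv n)) (a : Gv n) : Q6v n :=
  odflt [ffun _ => 0] [pick v | PsiE E v == a].

Definition gEH (n : nat) (E : seq (Qv n)) (H : seq (Gv n)) : seq (Q6v n) :=
  map (PsiE_inv E) H.

(* Main.v *)
Require Import Defs.
From mathcomp Require Import all_boot all_order all_algebra.
Set Implicit Arguments. Unset Strict Implicit. Unset Printing Implicit Defensive.
Import GRing.Theory.
Local Open Scope ring_scope.

Lemma ham_mem (T : finType) (adj : rel T) c x : HamCycle adj c -> x \in c.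
Proof.
case=> Hu Hs _ _; apply/negPn/negP => Hx.
have : uniq (x :: c) by rewrite /= Hx.
move/card_uniqP => Hc.
have := max_card (mem (x :: c)); rewrite Hc /= Hs ltnn //.
Qed.

Lemma index_next (T : eqType) (c : seq T) x :
  uniq c -> x \in c -> index (next c x) c = ((index x c).+1 %% size c)%N.
Proof.
case: c => [//|y p] Hu Hx; rewrite next_nth Hx.
have Hk : (index x (y :: p) < (size p).+1)%N by have := Hx; rewrite -index_mem.
case: (ltnP (index x (y :: p)) (size p)) => Hk2.
  have -> : nth y p (index x (y :: p)) = nth y (y :: p) (index x (y :: p)).+1 by [].
  rewrite index_uniq //= modn_small //.
have -> : index x (y :: p) = size p by apply/eqP; rewrite eqn_leq Hk2 -ltnS Hk.
rewrite nth_default // modnn /= eqxx //.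
Qed.

Lemma adjZ_sym (I : finType) (R : nzRingType) (x y : {ffun I -> R}) :
  Defs.adjZ x y -> Defs.adjZ y x.
Proof.
case/existsP=> i /andP[/forallP Hf Hi]; apply/existsP; exists i; apply/andP; split.
  apply/forallP=> j; apply/implyP=> Hj; rewrite eq_sym; exact: (implyP (Hf j) Hj).
by case/orP: Hi => /eqP ->; rewrite ?addrK ?subrK eqxx ?orbT.
Qed.

Lemma adjZ_neq (I : finType) (R : nzRingType) (x y : {ffun I -> R}) :
  Defs.adjZ x y -> x != y.
Proof.
case/existsP=> i /andP[_ Hi]; apply/negP=> /eqP Hxy; subst y.
case/orP: Hi => /eqP H.
  have : x i + 0 = x i + 1 by rewrite addr0 -H.
  by move/addrI/eqP; rewrite eq_sym oner_eq0.
have : x i + 0 = x i + - 1 by rewrite addr0 -H.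
by move/addrI/eqP; rewrite eq_sym oppr_eq0 oner_eq0.
Qed.

Lemma cycle_edge_adj (T : eqType) (adj : rel T) c x y :
  cycle adj c -> cycle_edge c x y -> adj x y || adj y x.
Proof.
move=> Hc /and3P[Hx Hy /orP[/eqP <-|/eqP <-]].
  by rewrite (next_cycle Hc Hx).
by rewrite (next_cycle Hc Hy) orbT.
Qed.

Lemma cycle_edge_map (T T' : eqType) (f : T -> T') c a b :
  injective f -> uniq c ->
  cycle_edge (map f c) (f a) (f b) = cycle_edge c a b.
Proof.
move=> Hf Hu; rewrite /cycle_edge !mem_map // !next_map // !(inj_eq Hf) //.
Qed.

Section Q.
Variable n : nat.
Hypothesis hn : (1 <= n)%N.

Lemma N_gt1 : (1 < 4 ^ n)%N.
Proof. by rewrite -(expn0 4) ltn_exp2l. Qed.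

Lemma card_Qv : #|Qv n| = (4 ^ n)%N.
Proof. by rewrite card_ffun card_ord card_ord. Qed.

Lemma val_piE (E : seq (Qv n)) x : val (Defs.piE E x) = (index x E %% 4 ^ n)%N :> nat.
Proof. by rewrite /Defs.piE /= val_Zp_nat // N_gt1. Qed.

Variable E : seq (Qv n).
Hypothesis HE : HamCycle (@Qadj n) E.

Lemma sizeE : size E = (4 ^ n)%N.
Proof. by case: HE => _ -> _ _; rewrite card_Qv. Qed.

Lemma memE x : x \in E.
Proof. exact: ham_mem HE. Qed.

Lemma idxE x : (index x E < 4 ^ n)%N.
Proof. by rewrite -sizeE index_mem memE. Qed.

Lemma piE_inj : injective (Defs.piE E).
Proof.
move=> x y /(congr1 val); rewrite !val_piE !modn_small ?idxE // => Hi.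
by rewrite -(nth_index x (memE x)) Hi nth_index // memE.
Qed.

Lemma Lnext x y : Defs.piE E x = Defs.piE E y + 1 <-> x = next E y.
Proof.
have Hu : uniq E by case: HE.
have -> : Defs.piE E y + 1 = Defs.piE E (next E y).
  apply: val_inj; rewrite val_piE index_next ?memE // sizeE.
  rewrite /Defs.piE -(natrD _ _ 1) addn1 /= val_Zp_nat ?modn_mod //; exact: N_gt1.
by split=> [/piE_inj|->].
Qed.

Definition block (v : Q6v n) (j : 'I_3) : Qv n := [ffun i => v (j, i)].

Lemma PsiE_block v j : PsiE E v j = Defs.piE E (block v j).
Proof. by rewrite ffunE. Qed.

Lemma PsiE_inj : injective (PsiE E).
Proof.
move=> v w Hvw; apply/ffunP=> [[j i]].
have := congr1 (fun f : Gv n => f j) Hvw; rewrite /= !PsiE_block => /piE_inj.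
by move/(congr1 (fun f : Qv n => f i)); rewrite !ffunE.
Qed.

Definition Rinv (a : Gv n) : Q6v n :=
  [ffun p : 'I_3 * 'I_n => nth (qzero n) E (a p.1) p.2].

Lemma PsiE_R a : PsiE E (Rinv a) = a.
Proof.
apply/ffunP=> j; rewrite PsiE_block.
have -> : block (Rinv a) j = nth (qzero n) E (a j).
  by apply/ffunP=> i; rewrite !ffunE.
have Hu : uniq E by case: HE.
rewrite /Defs.piE index_uniq //; first exact: natr_Zp.
rewrite sizeE; move: (a j) => k; have := ltn_ord k; move: (nat_of_ord k); rewrite (Zp_cast N_gt1) //.
Qed.

Lemma PsiE_invK a : PsiE E (PsiE_inv E a) = a.
Proof.
rewrite /PsiE_inv; case: pickP => [v /eqP //| Hn].
by have := Hn (Rinv a); rewrite PsiE_R eqxx.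
Qed.

Lemma PsiEK v : PsiE_inv E (PsiE E v) = v.
Proof. by apply: PsiE_inj; rewrite PsiE_invK. Qed.

Lemma Q6adj_blocks x y : Q6adj x y <->
  exists j0, (forall j, j != j0 -> block x j = block y j) /\
             Qadj (block x j0) (block y j0).
Proof.
split.
  case/existsP=> [[j0 i0]] /andP[/forallP Hf Hi]; exists j0; split.
    move=> j Hj; apply/ffunP=> i; rewrite !ffunE; apply/eqP.
    by apply: (implyP (Hf (j, i))); rewrite xpair_eqE negb_and Hj.
  apply/existsP; exists i0; rewrite !ffunE Hi andbT.
  apply/forallP=> i; apply/implyP=> Hi0; rewrite !ffunE.
  by apply: (implyP (Hf (j0, i))); rewrite xpair_eqE negb_and Hi0 orbT.
case=> j0 [Hb /existsP[i0 /andP[/forallP Hf Hi]]].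
apply/existsP; exists (j0, i0); rewrite !ffunE in Hi; rewrite Hi andbT.
apply/forallP=> [[j i]]; apply/implyP; rewrite xpair_eqE negb_and.
case: (eqVneq j j0) => [->|Hj] /= Hi2.
  by have := implyP (Hf i) Hi2; rewrite !ffunE.
by have := congr1 (fun f : Qv n => f i) (Hb j Hj); rewrite /= !ffunE => ->.
Qed.

Lemma L1 a b : Gadj a b -> Q6adj (PsiE_inv E a) (PsiE_inv E b).
Proof.
set v := PsiE_inv E a; set w := PsiE_inv E b.
have Ha : forall j, Defs.piE E (block v j) = a j.
  by move=> j; rewrite -PsiE_block PsiE_invK.
have Hb : forall j, Defs.piE E (block w j) = b j.
  by move=> j; rewrite -PsiE_block PsiE_invK.
case/existsP=> j0 /andP[/forallP Hf Hi]; apply/Q6adj_blocks; exists j0; split.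
  move=> j Hj; apply: piE_inj; rewrite Ha Hb; apply/eqP.
  exact: (implyP (Hf j) Hj).
have Hc : cycle (@Qadj n) E by case: HE.
case/orP: Hi => /eqP Hi.
  have : Defs.piE E (block w j0) = Defs.piE E (block v j0) + 1 by rewrite Ha Hb.
  by move/Lnext => ->; apply: next_cycle Hc (memE _).
have : Defs.piE E (block v j0) = Defs.piE E (block w j0) + 1 by rewrite Ha Hb Hi subrK.
move/Lnext => Heq; apply: adjZ_sym; rewrite Heq.
exact: next_cycle Hc (memE _).
Qed.

Lemma L2 v w j0 : (forall j, j != j0 -> block v j = block w j) ->
  block v j0 != block w j0 ->
  Gadj (PsiE E v) (PsiE E w) <-> cycle_edge E (block v j0) (block w j0).
Proof.
move=> Hb Hne; split.
  case/existsP=> k /andP[/forallP Hf Hi].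
  case: (eqVneq k j0) => [Hk|Hk].
    subst k; rewrite !PsiE_block in Hi.
    rewrite /cycle_edge !memE /=.
    case/orP: Hi => /eqP Hi.
      by move/Lnext: Hi => ->; rewrite eqxx.
    have : Defs.piE E (block v j0) = Defs.piE E (block w j0) + 1 by rewrite Hi subrK.
    by move/Lnext => ->; rewrite eqxx orbT.
  have := implyP (Hf j0); rewrite eq_sym Hk !PsiE_block => /(_ isT) /eqP.
  by move/piE_inj => Heq; rewrite Heq eqxx in Hne.
case/and3P=> _ _ Hi; apply/existsP; exists j0; apply/andP; split.
  apply/forallP=> j; apply/implyP=> Hj; rewrite !PsiE_block Hb //.
rewrite !PsiE_block; case/orP: Hi => /eqP Hi.
  by have := proj2 (Lnext (block w j0) (block v j0)) (esym Hi) => ->; rewrite eqxx.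
have := proj2 (Lnext (block v j0) (block w j0)) (esym Hi) => ->.
by rewrite addrK eqxx orbT.
Qed.

End Q.

Theorem corollary2 (n : nat) (hn : (1 <= n)%N)
    (H : 'I_3 -> seq (Gv n)) (E : 'I_n -> seq (Qv n)) :
  HamDecomp (@Gadj n) H ->
  HamDecomp (@Qadj n) E ->
  (forall i, head (qzero n) (E i) = qzero n) ->
  HamDecomp (@Q6adj n) (fun p : 'I_n * 'I_3 => gEH (E p.1) (H p.2)).
Proof.
move=> [HH HHe] [HE HEe] _; split.
  move=> [i j] /=; rewrite /gEH.
  have Hi := HE i; case: (HH j) => Hu Hs H2 Hc.
  have Hinj : injective (PsiE_inv (E i)) := can_inj (PsiE_invK hn Hi).
  have Hcard : #|Q6v n| = #|Gv n|.
    apply: (bij_eq_card (f := PsiE (E i))).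
    by exists (PsiE_inv (E i)); [exact: PsiEK | exact: PsiE_invK].
  split.
  - by rewrite map_inj_uniq.
  - by rewrite size_map Hs Hcard.
  - by rewrite size_map.
  rewrite (@cycle_map _ _ (PsiE_inv (E i)) (@Q6adj n) (H j)).
  apply: sub_cycle Hc => a b /=; exact: L1.
move=> x y /Q6adj_blocks [j0 [Hb Hq]].
have [i [Hei Hiu]] := HEe _ _ Hq.
have Hne := adjZ_neq Hq.
have HG := proj2 (L2 hn (HE i) Hb Hne) Hei.
have [j [Hej Hju]] := HHe _ _ HG.
have Hinj : forall i, injective (PsiE_inv (E i)) := fun i => can_inj (PsiE_invK hn (HE i)).
exists (i, j); split => /=.
  rewrite /gEH -(PsiEK hn (HE i) x) -(PsiEK hn (HE i) y) cycle_edge_map //.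
  by case: (HH j).
move=> [i' j'] /=; rewrite /gEH -(PsiEK hn (HE i') x) -(PsiEK hn (HE i') y).
rewrite cycle_edge_map //; last by case: (HH j').
move=> Hc'.
have Hadj : Gadj (PsiE (E i') x) (PsiE (E i') y).
  case: (HH j') => _ _ _ Hcy.
  by case/orP: (cycle_edge_adj Hcy Hc') => // /adjZ_sym.
have Hei' := proj1 (L2 hn (HE i') Hb Hne) Hadj.
have Eii := Hiu _ Hei'; subst i'.
by rewrite (Hju _ Hc').
Qed.
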